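(* Let $0.5<p\le 1$, $q=1-p$ and $1-1/p\le\rho\le 0$, and set $s=\sqrt{-\rho pq}$. For a group of two contributors $u_a,u_b$, let $R_a\in\{1,-1\}$ be uniformly random and $R_b=-R_a$. Let $C_a,C_b$ be independent of each other and of $R_a$, each with distribution $\Pr[C=1.5]=p-s$, $\Pr[C=0.5]=s$, $\Pr[C=-0.5]=s$, $\Pr[C=-1.5]=q-s$. For $j\in\{a,b\}$ let $T_j=1$ if $C_j+R_j>0$ and $T_j=0$ if $C_j+R_j<0$. Then the joint distribution of $(T_a,T_b)$ is $\Pr[T_a=1,T_b=1]=p^2+\rho pq$, $\Pr[T_a=1,T_b=0]=\Pr[T_a=0,T_b=1]=(1-\rho)pq$, $\Pr[T_a=0,T_b=0]=q^2+\rho pq$.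
   Context: This describes the non-colluding-server instantiation of Joint Randomized Response: the server generates $R_a,R_b$ for each group, and each contributor generates $C_j$ locally; $T_j$ indicates whether contributor $u_j$ reports truthfully. *)

(* Defs.v *)
From HB Require Import structures.
From mathcomp Require Import all_boot all_order all_algebra.
Set Implicit Arguments. Unset Strict Implicit. Unset Printing Implicit Defensive.
Import Order.TTheory GRing.Theory Num.Theory.
Local Open Scope ring_scope.

(* Sample space: (sign of R_a, index of C_a, index of C_b).
   sign true means R_a = 1, false means R_a = -1; R_b = - R_a. *)
Definition Omega := (bool * 'I_4 * 'I_4)%type.

Section JRR.
Variable R : rcfType.

Definition Cval (i : 'I_4) : R :=
  match val i with
  | 0%N => 3 / 2
  | 1%N => 1 / 2
  | 2%N => - (1 / 2)
  | _ => - (3 / 2)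
  end.

Definition Cprob (p s : R) (i : 'I_4) : R :=
  match val i with
  | 0%N => p - s
  | 1%N => s
  | 2%N => s
  | _ => (1 - p) - s
  end.

Definition Ra (w : Omega) : R := if w.1.1 then 1 else -1.
Definition Rb (w : Omega) : R := - Ra w.
Definition Ca (w : Omega) : R := Cval w.1.2.
Definition Cb (w : Omega) : R := Cval w.2.

Definition mass (p s : R) (w : Omega) : R :=
  (1 / 2) * Cprob p s w.1.2 * Cprob p s w.2.

Definition Prob (p s : R) (E : pred Omega) : R :=
  \sum_(w : Omega | E w) mass p s w.

(* T_j = 1 iff C_j + R_j > 0 (C_j + R_j is never 0) *)
Definition Ta (w : Omega) : bool := 0 < Ca w + Ra w.
Definition Tb (w : Omega) : bool := 0 < Cb w + Rb w.

End JRR.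
Arguments Ta {R} w.
Arguments Tb {R} w.
Arguments Ra {R} w.
Arguments Rb {R} w.
Arguments Ca {R} w.
Arguments Cb {R} w.

(* Main.v *)
Require Import Defs.
From HB Require Import structures.
From mathcomp Require Import all_boot all_order all_algebra.
From mathcomp Require Import ring lra.
Import Order.TTheory GRing.Theory Num.Theory.
Local Open Scope ring_scope.

Lemma TaE (R : rcfType) (w : Omega) :
  Ta (R:=R) w = (if w.1.1 then (w.1.2 < 3)%N else (w.1.2 == 0 :> nat)).
Proof.
case: w => [[b [[|[|[|[|k]]]] Hk]] j] //=; rewrite /Ta /Ca /Ra /Cval /=;
case: b => /=; match goal with |- (0 < ?x) = _ => case: (ltrP 0 x) => H; first [done | exfalso; lra] end.
Qed.

Lemma TbE (R : rcfType) (w : Omega) :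
  Tb (R:=R) w = (if w.1.1 then (w.2 == 0 :> nat) else (w.2 < 3)%N).
Proof.
case: w => [[b i] [[|[|[|[|k]]]] Hk]] //=; rewrite /Tb /Cb /Rb /Ra /Cval /=;
case: b => /=; match goal with |- (0 < ?x) = _ => case: (ltrP 0 x) => H; first [done | exfalso; lra] end.
Qed.

Lemma ProbE (R : rcfType) p s (E : pred Omega) :
  Prob p s E = \sum_(b : bool) \sum_(i : 'I_4) \sum_(j : 'I_4)
     (if E (b, i, j) then mass (R:=R) p s (b, i, j) else 0).
Proof.
rewrite /Prob big_mkcond [RHS]pair_bigA /= [RHS]pair_bigA /=.
by apply: eq_bigr => -[[b i] j] _.
Qed.

Theorem theorem5 (R : rcfType) (p rho : R) :
  1 / 2 < p -> p <= 1 -> 1 - 1 / p <= rho -> rho <= 0 ->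
  let q := 1 - p in
  let s := Num.sqrt (- rho * p * q) in
  [/\ Prob p s [pred w : Omega | Ta (R:=R) w && Tb (R:=R) w] = p ^+ 2 + rho * p * q,
      Prob p s [pred w : Omega | Ta (R:=R) w && ~~ Tb (R:=R) w] = (1 - rho) * p * q,
      Prob p s [pred w : Omega | ~~ Ta (R:=R) w && Tb (R:=R) w] = (1 - rho) * p * q &
      Prob p s [pred w : Omega | ~~ Ta (R:=R) w && ~~ Tb (R:=R) w] = q ^+ 2 + rho * p * q].
Proof.
move=> hp1 hp2 hr1 hr2 q s.
have hs : s ^+ 2 = - rho * p * q.
  rewrite sqr_sqrtr // /q -mulrA mulr_ge0 //; first by rewrite oppr_ge0.
  apply: mulr_ge0; lra.
rewrite !ProbE !big_bool /= !big_ord_recl !big_ord0 /= !TaE !TbE /=.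
rewrite /mass /Cprob /=.
rewrite /q; rewrite /q in hs; clearbody s.
have hr : rho * p * (1 - p) = - s ^+ 2 by rewrite hs; ring.
have hrr : (1 - rho) * p * (1 - p) = p * (1 - p) + s ^+ 2 by rewrite -(opprK (s ^+ 2)) -hr; ring.
rewrite hr hrr; split; field; done.
Qed.
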